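(* Let $D$ be a long knot diagram, possibly with null vertices, and let $a\neq b$ be two points on edges of $D$, away from crossings and null vertices. Let $D'$ be obtained from $D$ by inserting a new null vertex at a point of an edge different from $a$ and $b$. Then $\tilde g_{ab}$ computed in $D'$ equals $\tilde g_{ab}$ computed in $D$.
   Context: A long knot diagram is a planar diagram of a long oriented knot. It may contain null vertices: marked points on the knot (away from crossings) whose only role is to cut edges. Edges are the arcs obtained by cutting the knot at every crossing (on both strands) and at every null vertex; they are labelled by distinct labels, and for a label $\ell$ we write $\ell^+$ for the label of the next edge along the orientation. A crossing is $c=(s,i,j)$ with sign $s=\pm1$, incoming over-edge $i$ and incoming under-edge $j$ (outgoing over-edge $i^+$, outgoing under-edge $j^+$). A null vertex with incoming edge $j$ and outgoing edge $k$ is recorded by the pair $(j,k)$. Let $A=I+\sum_cA_c+\sum_{\mathrm{nv}}A_{\mathrm{nv}}$ (square matrix indexed by edge labels over $\mathbb{Z}[T^{\pm1}]$), where for a crossing $c=(s,i,j)$, $A_c$ is zero except for entry $-T^s$ at $(i,i^+)$, entry $T^s-1$ at $(i,j^+)$ and entry $-1$ at $(j,j^+)$; and for a null vertex $(j,k)$, $A_{\mathrm{nv}}$ is zero except for entry $-1$ at $(j,k)$. Let $G=(g_{\alpha\beta})=A^{-1}$ (over $\mathbb{Q}(T)$). For two distinct points $a,b$ on edges $\alpha,\beta$ (away from crossings and null vertices), define $\tilde g_{ab}=g_{\alpha\beta}$ if $\alpha\neq\beta$ or if $\alpha=\beta$ and $a$ precedes $b$ along the orientation of that edge, and $\tilde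 g_{ab}=g_{\alpha\beta}-1$ if $\alpha=\beta$ and $a$ comes after $b$. *)

(* Defs.v *)
From HB Require Import structures.
From mathcomp Require Import all_boot all_order all_algebra.
Set Implicit Arguments. Unset Strict Implicit. Unset Printing Implicit Defensive.
Import Order.TTheory GRing.Theory Num.Theory.
Local Open Scope ring_scope.

Definition QT : fieldType := {fraction {poly rat}}.
Definition T : QT := tofrac ('X : {poly rat}).

(* The long knot is parametrized by the (rational) line, oriented by the
   usual order.  A crossing is recorded by its sign and by the two points of
   the line where the over-strand and the under-strand pass through it. *)
Record crossing := Crossing { csign : int; cover : rat; cunder : rat }.

Record diagram := Diagram { crossings : seq crossing; nulls : seq rat }.

Definition cutpts (D : diagram) : seq rat :=
  [seq cover c | c <- crossings D] ++ [seq cunder c | c <- crossings D] ++ nulls D.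

Definition wf_diagram (D : diagram) : Prop :=
  uniq (cutpts D) /\ all (fun c => (csign c == 1) || (csign c == -1)) (crossings D).

(* Number of edges, edges labelled 0..nedges-1 in the order along the knot;
   the successor of label l is l+1. *)
Definition nedges (D : diagram) : nat := (size (cutpts D)).+1.

(* The edge containing point x (x not a cut point): number of cut points before x.
   For a cut point x, this is the label of the incoming edge at x. *)
Definition edge (D : diagram) (x : rat) : nat := count (fun v => v < x) (cutpts D).

Definition crossing_entry (D : diagram) (c : crossing) (r k : nat) : QT :=
  let s := csign c in
  let i := edge D (cover c) in
  let j := edge D (cunder c) in
  (if (r == i) && (k == i.+1) then - T ^ s else 0)
  + (if (r == i) && (k == j.+1) then T ^ s - 1 else 0)
  + (if (r == j) && (k == j.+1) then -1 else 0).

Definition null_entry (D : diagram) (p : rat) (r k : nat) : QT :=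
  if (r == edge D p) && (k == (edge D p).+1) then -1 else 0.

Definition Amx (D : diagram) : 'M[QT]_(nedges D) :=
  \matrix_(r, k) ((r == k :> nat)%:R
                  + \sum_(c <- crossings D) crossing_entry D c r k
                  + \sum_(p <- nulls D) null_entry D p r k).

Definition Gmx (D : diagram) : 'M[QT]_(nedges D) := invmx (Amx D).

Definition gtilde (D : diagram) (a b : rat) : QT :=
  Gmx D (inord (edge D a)) (inord (edge D b))
  - (if (edge D a == edge D b) && (b < a) then 1 else 0).

Definition insert_null (D : diagram) (p : rat) : diagram :=
  Diagram (crossings D) (p :: nulls D).

(* Main.v *)
Require Import Defs.
From HB Require Import structures.
From mathcomp Require Import all_boot all_order all_algebra zify.
Import Order.TTheory GRing.Theory Num.Theory.
Local Open Scope ring_scope.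

Definition ent (t : QT * nat * nat) (r k : nat) : QT :=
  if (r == t.1.2)%N && (k == t.2.+1)%N then t.1.1 else 0.
Definition EL (L : seq (QT * nat * nat)) (r k : nat) : QT :=
  (r == k)%:R + \sum_(t <- L) ent t r k.

Lemma sum_delta m r (F : nat -> QT) : (r < m)%N ->
  \sum_(0 <= k < m) (if k == r then F k else 0) = F r.
Proof.
elim: m => // m IH; rewrite ltnS leq_eqVlt => /orP [/eqP-> | lt].
  rewrite big_nat_recr //= eqxx big1_seq ?add0r // => k.
  by rewrite mem_index_iota => /andP[_ /ltn_eqF ->].
by rewrite big_nat_recr //= IH // (gtn_eqF lt) addr0.
Qed.

Lemma expand m L r (F : nat -> QT) : (r < m)%N ->
  (forall t, t \in L -> (t.2.+1 < m)%N) ->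
  \sum_(0 <= k < m) EL L r k * F k =
  F r + \sum_(t <- L) (if r == t.1.2 then t.1.1 * F t.2.+1 else 0).
Proof.
move=> rm HL.
rewrite (eq_bigr (fun k => (if k == r then F k else 0) + \sum_(t <- L) ent t r k * F k)); last first.
  move=> k _; rewrite /EL mulrDl mulr_suml; congr (_ + _).
  by rewrite eq_sym; case: (k == r); rewrite ?mul1r ?mul0r.
rewrite big_split /= sum_delta //; congr (_ + _).
rewrite exchange_big /=; apply: eq_big_seq => t tL.
rewrite (eq_bigr (fun k => if k == t.2.+1 then (if r == t.1.2 then t.1.1 * F k else 0) else 0)).
  by rewrite sum_delta // HL.
by move=> k _; rewrite /ent; case: eqP; case: eqP; rewrite ?mul0r.
Qed.

Definition phi (e u : nat) : nat := (u + (e <= u))%N.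
Definition psi (e x : nat) : nat := if (x <= e)%N then x else x.-1.
Definition phit e (t : QT*nat*nat) := (t.1.1, phi e t.1.2, phi e t.2).
Definition Hf e (G : nat -> nat -> QT) (x y : nat) : QT :=
  G (psi e x) (psi e y) - ((x == e.+1) && (y == e))%:R.

Lemma key n e L G m : (e < n)%N -> m = n.+1 ->
  (forall t, t \in L -> (t.1.2.+1 < n)%N && (t.2.+1 < n)%N) ->
  (forall r b, (r < n)%N -> (b < n)%N -> \sum_(0 <= k < n) EL L r k * G k b = (r == b)%:R) ->
  forall r b, (r < m)%N -> (b < m)%N ->
  \sum_(0 <= x < m) EL ((-1, e, e) :: map (phit e) L) r x * Hf e G x b = (r == b)%:R.
Proof.
move=> en -> HL HG r b rm bm.
rewrite expand //; last first.
  move=> t; rewrite inE => /orP[/eqP -> /= | /mapP [[[w u] v] t0L ->] /=]; first lia.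
  have := HL _ t0L; rewrite /phi /=; case: (e <= v)%N => /=; lia.
rewrite big_cons big_map /=.
have Hs: forall t, t \in L -> Hf e G (phi e t.2).+1 b = G t.2.+1 (psi e b).
  move=> [[w u] v] tL /=; rewrite /Hf /psi /phi.
  case: (leqP e v) => hv /=; rewrite ?addn1 ?addn0.
    rewrite (_ : (v.+2 <= e)%N = false); last lia.
    rewrite (_ : (v.+2 == e.+1) = false); last lia.
    by rewrite subr0.
  rewrite (_ : (v.+1 <= e)%N = true); last lia.
  rewrite (_ : (v.+1 == e.+1) = false); last lia.
  by rewrite subr0.
rewrite (eq_big_seq (fun t => if r == phi e t.1.2 then t.1.1 * G t.2.+1 (psi e b) else 0)); last first.
  by move=> t tL; rewrite Hs.
have psin : forall x, (x < n.+1)%N -> (psi e x < n)%N.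
  by move=> x; rewrite /psi; case: (leqP x e); lia.
case: (eqVneq r e) => [-> | re].
  rewrite big1_seq; last first.
    move=> [[w u] v] _ /=; rewrite /phi; case: (leqP e u) => h /=.
      by rewrite addn1; case: eqP => // ?; exfalso; lia.
    by rewrite addn0; case: eqP => // ?; exfalso; lia.
  rewrite addr0 /Hf /psi leqnn ltnn /= eqxx.
  rewrite (_ : (e == e.+1) = false); last lia.
  rewrite /= subr0 mulN1r opprB addrC subrK.
  by rewrite eq_sym.
rewrite add0r.
rewrite (eq_big_seq (fun t => if psi e r == t.1.2 then t.1.1 * G t.2.+1 (psi e b) else 0)); last first.
  move=> [[w u] v] _ /=; congr (if _ then _ else _); rewrite /phi /psi.
  move: re; case: (leqP e u) => h1 /=; case: (leqP r e)=> h2; rewrite ?addn1 ?addn0; lia.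
have := @expand n L (psi e r) (G ^~ (psi e b)) (psin r rm) (fun t tL => proj2 (andP (HL t tL))).
rewrite HG ?psin // => E.
rewrite (_ : \sum_(i <- L) _ = (psi e r == psi e b)%:R - G (psi e r) (psi e b)); last first.
  by rewrite E addrC addKr.
rewrite /Hf addrC addrA subrK.
have -> : (psi e r == psi e b) = (r == b) || ((r == e.+1) && (b == e)).
  move: re; rewrite /psi; case: (leqP r e) => h1; case: (leqP b e) => h2; lia.
case: (eqVneq r b) => [-> | rb] /=.
  by rewrite (_ : (b == e.+1) && (b == e) = false) ?subr0 //; lia.
by case: ((r == e.+1) && (b == e)); rewrite ?subrr ?subr0.
Qed.

Definition ctrips (l : rat -> nat) (c : crossing) : seq (QT*nat*nat) :=
  [:: (- T ^ csign c, l (Defs.cover c), l (Defs.cover c));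
      (T ^ csign c - 1, l (Defs.cover c), l (cunder c));
      (-1, l (cunder c), l (cunder c))].
Definition ntrip (l : rat -> nat) (q : rat) : QT*nat*nat := (-1, l q, l q).
Definition trips (l : rat -> nat) (D : diagram) :=
  flatten (map (ctrips l) (crossings D)) ++ map (ntrip l) (nulls D).

Lemma AmxE D (r k : 'I_(nedges D)) : Amx D r k = EL (trips (edge D) D) r k.
Proof.
rewrite mxE /EL /trips big_cat /= -!addrA; congr (_ + _); congr (_ + _).
  elim: (crossings D) => [|c cs IH]; first by rewrite !big_nil.
  by rewrite big_cons /= !big_cons IH /crossing_entry /ent /= !addrA.
by rewrite big_map; apply: eq_bigr => q _; rewrite /null_entry /ent.
Qed.

Lemma edge_lt_size D x : x \in cutpts D -> (edge D x < size (cutpts D))%N.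
Proof.
rewrite /edge; elim: (cutpts D) => //= v s IH; rewrite inE => /orP[/eqP<- | /IH].
  by rewrite ltxx /= add0n ltnS count_size.
by case: (v < x) => /=; lia.
Qed.

Lemma edge_le_size D x : (edge D x <= size (cutpts D))%N.
Proof. exact: count_size. Qed.

Lemma edge_mono D x y : x <= y -> (edge D x <= edge D y)%N.
Proof. by move=> xy; apply: sub_count => v /= vx; exact: lt_le_trans vx xy. Qed.

Lemma edge_strict D x y : x \in cutpts D -> x < y -> (edge D x < edge D y)%N.
Proof.
rewrite /edge => + xy; elim: (cutpts D) => //= v s IH; rewrite inE => /orP[/eqP<- | /IH].
  rewrite ltxx xy /= add0n add1n ltnS; apply: sub_count => w /= wx.
  exact: lt_trans wx xy.
have: (v < x) ==> (v < y) by apply/implyP => vx; exact: lt_trans vx xy.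
by case: (v < x); case: (v < y) => //= _; lia.
Qed.

Lemma edge_ins D p x : edge (insert_null D p) x = (edge D x + (p < x)%R)%N.
Proof. rewrite /edge /cutpts /= !count_cat /=; lia. Qed.

Lemma edge_ins_cut D p x : x \in cutpts D -> p \notin cutpts D ->
  edge (insert_null D p) x = phi (edge D p) (edge D x).
Proof.
move=> xC pC; rewrite edge_ins /phi; congr (_ + _)%N.
have xp : x != p by apply: contraNneq pC => <-.
case: (ltgtP p x) => [px | xp' | E]; last by rewrite E eqxx in xp.
  by rewrite edge_mono // ltW.
by have := edge_strict D x p xC xp'; case: leqP.
Qed.

Lemma map_ext_in' (A B : Type) (f g : A -> B) s :
  (forall x, List.In x s -> f x = g x) -> map f s = map g s.
Proof. elim: s => //= x s IH H; rewrite H ?IH //; auto. Qed.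

Lemma In_mem (x : rat) s : List.In x s -> x \in s.
Proof. by elim: s => //= y s IH [->|/IH]; rewrite inE ?eqxx ?orbT // => ->; rewrite orbT. Qed.

Lemma In_map' (A B : Type) (f : A -> B) x s : List.In x s -> List.In (f x) (map f s).
Proof. elim: s => //= y s IH [->|/IH]; auto. Qed.

Lemma EL_ins D p r k : p \notin cutpts D ->
  EL (trips (edge (insert_null D p)) (insert_null D p)) r k =
  EL ((-1, edge D p, edge D p) :: map (phit (edge D p)) (trips (edge D) D)) r k.
Proof.
move=> pC; rewrite /EL; congr (_ + _).
have E1 : map (ctrips (edge (insert_null D p))) (crossings D) =
          map (fun c => map (phit (edge D p)) (ctrips (edge D) c)) (crossings D).
  apply: map_ext_in' => c cD.
  have oC : Defs.cover c \in cutpts D.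
    by rewrite /cutpts mem_cat (@In_mem _ _ (@In_map' _ _ Defs.cover _ _ cD)).
  have uC : cunder c \in cutpts D.
    by rewrite /cutpts !mem_cat (@In_mem _ _ (@In_map' _ _ cunder _ _ cD)) orbT.
  by rewrite /ctrips /= !edge_ins_cut.
have E2 : map (ntrip (edge (insert_null D p))) (nulls D) =
          map (fun q => phit (edge D p) (ntrip (edge D) q)) (nulls D).
  apply/eq_in_map => q qD /=.
  have qC : q \in cutpts D by rewrite /cutpts !mem_cat qD !orbT.
  by rewrite /ntrip /phit /= !edge_ins_cut.
have Ep : edge (insert_null D p) p = edge D p by rewrite edge_ins ltxx addn0.
rewrite /trips /= E1 E2 {1}/ntrip Ep map_cat map_flatten -!map_comp.
rewrite big_cat big_cons big_cons big_cat /= addrCA.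
done.
Qed.

Lemma exQ (L : seq (QT*nat*nat)) (P : QT*nat*nat -> {poly rat} -> Prop) :
  (forall t, t \in L -> exists q, P t q) -> exists Q, forall t, t \in L -> P t (Q t).
Proof.
elim: L => [_|t0 L IH H]; first by exists (fun _ => 0).
have [q0 Hq0] := H t0 (mem_head _ _).
have [Q HQ] : exists Q, forall t, t \in L -> P t (Q t).
  by apply: IH => t tL; apply: H; rewrite inE tL orbT.
exists (fun t => if t == t0 then q0 else Q t) => t; rewrite inE.
by case: eqP => [-> _ | _ /= tL]; auto.
Qed.

Lemma T_neq0 : T != 0.
Proof. by rewrite /T tofrac_eq0 polyX_eq0. Qed.

Lemma EL_unit n (L : seq (QT*nat*nat)) :
  (forall t, t \in L -> exists q : {poly rat},
     T * t.1.1 = tofrac q /\ (t.1.2 != t.2 -> q.[1] = 0)) ->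
  (\matrix_(r < n, k < n) EL L r k) \in unitmx.
Proof.
move=> H; have [Q HQ] := @exQ L _ H.
set A := \matrix_(r < n, k < n) EL L r k.
pose B : 'M[{poly rat}]_n := \matrix_(r, k) ((r == k :> nat)%:R * 'X +
   \sum_(t <- L) (if (r == t.1.2 :> nat) && (k == t.2.+1 :> nat) then Q t else 0)).
have HB : map_mx (fun x : {poly rat} => tofrac x) B = T *: A.
  apply/matrixP => r k; rewrite !mxE rmorphD rmorphM rmorph_nat rmorph_sum /= /EL.
  rewrite mulrDr mulr_sumr; congr (_ + _); first by rewrite mulrC.
  apply: eq_big_seq => t tL; rewrite /ent; case: ifP => _.
    by rewrite (proj1 (HQ t tL)).
  by rewrite rmorph0 mulr0.
rewrite unitmxE unitfE; apply/negP => /eqP dA.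
have : tofrac (\det B) = 0 by rewrite -det_map_mx HB detZ dA mulr0.
move/eqP; rewrite tofrac_eq0 => /eqP dB.
have : (\det B).[1] = 1.
  rewrite -horner_evalE -det_map_mx -det_tr det_trig.
    apply: big1 => i _; rewrite !mxE rmorphD rmorphM rmorph_nat rmorph_sum /= ?horner_evalE.
    rewrite hornerX eqxx mulr1 big1_seq ?addr0 //.
    move=> [[w u] v] /= tL; case: ifP => [/andP[/eqP E1 /eqP E2] | _]; last by rewrite rmorph0.
    by rewrite horner_evalE; apply: (HQ _ tL).2 => /=; lia.
  apply/is_trig_mxP => i j ij; rewrite !mxE rmorphD rmorphM rmorph_nat rmorph_sum /= ?horner_evalE.
  rewrite (_ : (j == i :> nat) = false) ?mul0r ?add0r; last by lia.
  rewrite big1_seq //.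
  move=> [[w u] v] /= tL; case: ifP => [/andP[/eqP E1 /eqP E2] | _]; last by rewrite rmorph0.
  by rewrite horner_evalE; apply: (HQ _ tL).2 => /=; lia.
by rewrite dB horner0 => /eqP; rewrite eq_sym oner_eq0.
Qed.

Definition goodt (t : QT*nat*nat) : Prop := exists q : {poly rat},
     T * t.1.1 = tofrac q /\ (t.1.2 != t.2 -> q.[1] = 0).

Lemma good_m1 u : goodt (-1, u, u).
Proof. by exists (- 'X); split => [|/=]; [rewrite rmorphN mulrN1 | rewrite eqxx]. Qed.

Lemma trips_ok D : wf_diagram D -> forall t, t \in trips (edge D) D -> goodt t.
Proof.
move=> [_ sD] t; rewrite /trips mem_cat => /orP[|/mapP [q _ ->]]; last exact: good_m1.
elim: (crossings D) sD => [|c cs IH] // /andP[sc scs].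
rewrite (_ : flatten _ = ctrips (edge D) c ++ flatten (map (ctrips (edge D)) cs)) //.
rewrite mem_cat => /orP[|/(IH scs) //].
rewrite !inE => /orP[/eqP->|/orP[/eqP->|/eqP->]]; last exact: good_m1.
- case/orP: sc => /eqP ->.
    exists (- 'X^2); split => [|/=]; last by rewrite eqxx.
    by rewrite expr1z rmorphN rmorphXn mulrN expr2.
  exists (-1); split => [|/=]; last by rewrite eqxx.
  by rewrite exprN1 mulrN mulfV ?T_neq0 // rmorphN rmorph1.
- case/orP: sc => /eqP ->.
    exists ('X^2 - 'X); split => [|_ /=].
      by rewrite expr1z rmorphB rmorphXn mulrBr mulr1 expr2.
    by rewrite !hornerE expr1n subrr.
  exists (1 - 'X); split => [|_ /=].
    by rewrite exprN1 rmorphB rmorph1 mulrBr mulfV ?T_neq0 // mulr1.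
  by rewrite !hornerE subrr.
Qed.

Lemma Amx_unit D : wf_diagram D -> Amx D \in unitmx.
Proof.
move=> wf.
have -> : Amx D = \matrix_(r < nedges D, k < nedges D) EL (trips (edge D) D) r k.
  by apply/matrixP => r k; rewrite AmxE mxE.
by apply: EL_unit; apply: trips_ok.
Qed.

Lemma trips_lab D t : t \in trips (edge D) D ->
  (t.1.2 < size (cutpts D))%N && (t.2 < size (cutpts D))%N.
Proof.
have Hc : forall c, List.In c (crossings D) ->
    (Defs.cover c \in cutpts D) && (cunder c \in cutpts D).
  move=> c cD; apply/andP; split.
    by rewrite /cutpts mem_cat (@In_mem _ _ (@In_map' _ _ Defs.cover _ _ cD)).
  by rewrite /cutpts !mem_cat (@In_mem _ _ (@In_map' _ _ cunder _ _ cD)) orbT.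
rewrite /trips mem_cat => /orP[|/mapP [q qD ->]]; last first.
  have qC : q \in cutpts D by rewrite /cutpts !mem_cat qD !orbT.
  by rewrite /= edge_lt_size.
elim: (crossings D) Hc => [|c cs IH] // Hc.
rewrite (_ : flatten _ = ctrips (edge D) c ++ flatten (map (ctrips (edge D)) cs)) //.
rewrite mem_cat => /orP[|]; last first.
  by apply: IH => c' H; apply: Hc; right.
have /andP[oC uC] := Hc c (or_introl erefl).
by rewrite !inE => /orP[/eqP->|/orP[/eqP->|/eqP->]]; rewrite /= !edge_lt_size.
Qed.

Theorem mainTheorem2 (D : diagram) (a b p : rat) :
  wf_diagram D ->
  a != b ->
  a \notin cutpts D -> b \notin cutpts D ->
  p \notin cutpts D -> p != a -> p != b ->
  gtilde (insert_null D p) a b = gtilde D a b.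
Proof.
move=> wf ab aC bC pC pa pb.
set D' := insert_null D p.
set e := edge D p.
set n := nedges D.
have en : (e < n)%N by rewrite /e /n /nedges ltnS edge_le_size.
have Hn' : nedges D' = n.+1.
  by rewrite /D' /n /nedges /cutpts /= !size_cat /= !addnS.
have AU := Amx_unit D wf.
pose G := fun k b => Gmx D (inord k) (inord b).
have HL : forall t, t \in trips (edge D) D -> (t.1.2.+1 < n)%N && (t.2.+1 < n)%N.
  by move=> t /trips_lab /andP[h1 h2]; rewrite /n /nedges !ltnS h1 h2.
have HG : forall r b, (r < n)%N -> (b < n)%N ->
    \sum_(0 <= k < n) EL (trips (edge D) D) r k * G k b = (r == b)%:R.
  move=> r b' rn bn.
  have := congr1 (fun M : 'M[QT]_(nedges D) => M (inord r) (inord b')) (mulmxV AU).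
  rewrite !mxE -val_eqE /= !inordK // => <-.
  rewrite big_mkord; apply: eq_bigr => k _.
  by rewrite AmxE inordK // /G /Gmx inord_val.
pose Hm : 'M[QT]_(nedges D') := \matrix_(x, y) Hf e G x y.
have HA' : Amx D' *m Hm = 1%:M.
  apply/matrixP => r b'; rewrite !mxE.
  rewrite (eq_bigr (fun k : 'I_(nedges D') =>
     EL ((-1, e, e) :: map (phit e) (trips (edge D) D)) r k * Hf e G k b')); last first.
    by move=> k _; rewrite AmxE EL_ins // mxE.
  rewrite -(big_mkord xpredT (fun k => EL ((-1, e, e) :: map (phit e) (trips (edge D) D)) r k * Hf e G k b')).
  exact: (key n e (trips (edge D) D) G (nedges D') en Hn' HL HG r b' (ltn_ord r) (ltn_ord b')).
have GH : Gmx D' = Hm.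
  have [uA' _] := mulmx1_unit HA'.
  by rewrite /Gmx -[invmx _]mulmx1 -HA' mulKmx.
rewrite /gtilde GH mxE !inordK ?ltnS ?edge_le_size //.
have psiE : forall x, x \notin cutpts D -> p != x -> psi e (edge D' x) = edge D x.
  move=> x xC px; rewrite edge_ins /psi.
  case: (ltgtP p x) => [h|h|h]; last by rewrite h eqxx in px.
    have := edge_mono D p x (ltW h); rewrite -/e => h1.
    by rewrite /= addn1 ltnNge h1.
  have := edge_mono D x p (ltW h); rewrite -/e => h1.
  by rewrite /= addn0 h1.
rewrite /Hf /G !psiE // -!addrA -opprD; congr (_ - _).
have ea1 : (p < a) -> (e <= edge D a)%N by move=> h; apply: edge_mono; apply: ltW.
have ea2 : (a < p) -> (edge D a <= e)%N by move=> h; apply: edge_mono; apply: ltW.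
have eb1 : (p < b) -> (e <= edge D b)%N by move=> h; apply: edge_mono; apply: ltW.
have eb2 : (b < p) -> (edge D b <= e)%N by move=> h; apply: edge_mono; apply: ltW.
rewrite /D' !edge_ins.
case: (ltgtP p a) => [pa'|ap|E]; last by rewrite E eqxx in pa.
all: case: (ltgtP p b) => [pb'|bp|E]; last by rewrite E eqxx in pb.
- have h1 := ea1 pa'; have h2 := eb1 pb'.
  rewrite /= !addn1 !eqSS (_ : ((edge D b).+1 == e) = false); last by clear -h1 h2; lia.
  by rewrite andbF /= add0r.
- have h1 := ea1 pa'; have h2 := eb2 bp.
  rewrite /= addn1 addn0 eqSS (_ : ((edge D a).+1 == edge D b) = false); last by clear -h1 h2; lia.
  rewrite (lt_trans bp pa') /= addr0.
  rewrite (_ : (edge D a == edge D b) = (edge D a == e) && (edge D b == e)); last by clear -h1 h2; lia.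
  by case: (_ && _).
- have h1 := ea2 ap; have h2 := eb1 pb'.
  rewrite /= addn1 addn0 (_ : (edge D a == e.+1) = false); last by clear -h1 h2; lia.
  rewrite (_ : (edge D a == (edge D b).+1) = false); last by clear -h1 h2; lia.
  rewrite (_ : (b < a) = false); last first.
    by apply/negbTE; rewrite -leNgt ltW // (lt_trans ap pb').
  by rewrite !andbF /= add0r.
- have h1 := ea2 ap; have h2 := eb2 bp.
  rewrite /= !addn0 (_ : (edge D a == e.+1) = false); last by clear -h1 h2; lia.
  by rewrite /= add0r.
Qed.
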